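(* Let $n\ge m>1$ be integers. Then $$\max\Big\{\sum_{i,j=1}^n t_it_j\,|U^\top U|_{ij}:\ t\in\mathbb{R}^n,\ \|t\|_2=1,\ U\in\mathbb{R}^{m\times n},\ UU^\top=\mathrm{I}_m\Big\}\ \le\ \frac{m}{n}\left(1+\sqrt{\frac{(n-1)(n-m)}{m}}\right),$$ with equality if and only if there exists $U\in\mathbb{R}^{m\times n}$ with $UU^\top=\mathrm{I}_m$, $(U^\top U)_{ii}=m/n$ for all $i\in\{1,\dots,n\}$, and $|U^\top U|_{ij}=\frac1n\sqrt{\frac{(n-m)m}{n-1}}$ for all $i\ne j$.
   Context: $|A|_{ij}$ denotes the absolute value of the $(i,j)$ entry of a matrix $A$. *)

(* Defs.v *)
From mathcomp Require Import all_boot all_order all_algebra.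
Set Implicit Arguments. Unset Strict Implicit. Unset Printing Implicit Defensive.
Import Order.TTheory GRing.Theory Num.Theory.
Local Open Scope ring_scope.

Definition norm2 (R : rcfType) (n : nat) (t : 'rV[R]_n) : R :=
  Num.sqrt (\sum_(i < n) t 0 i ^+ 2).

Definition objective (R : rcfType) (m n : nat) (t : 'rV[R]_n) (U : 'M[R]_(m, n)) : R :=
  \sum_(i < n) \sum_(j < n) t 0 i * t 0 j * `|(U^T *m U) i j|.

Definition bound (R : rcfType) (m n : nat) : R :=
  m%:R / n%:R * (1 + Num.sqrt ((n%:R - 1) * (n%:R - m%:R) / m%:R)).

(* Main.v *)
Require Import Defs.
From mathcomp Require Import all_boot all_order all_algebra.
From mathcomp Require Import ring lra.
Set Implicit Arguments. Unset Strict Implicit. Unset Printing Implicit Defensive.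
Import Order.TTheory GRing.Theory Num.Theory.
Local Open Scope ring_scope.

Section CS.
Variables (R : rcfType) (T : finType) (c e : T -> R).

Let C := \sum_i c i ^+ 2.
Let E := \sum_i e i ^+ 2.
Let S := \sum_i c i * e i.

Lemma cs_expand :
  \sum_i (Num.sqrt E * c i - Num.sqrt C * e i) ^+ 2 =
  2 * (Num.sqrt C * Num.sqrt E) * (Num.sqrt C * Num.sqrt E - S).
Proof.
have C0 : 0 <= C by apply: sumr_ge0 => i _; apply: sqr_ge0.
have E0 : 0 <= E by apply: sumr_ge0 => i _; apply: sqr_ge0.
have -> : \sum_i (Num.sqrt E * c i - Num.sqrt C * e i) ^+ 2 =
  \sum_i (Num.sqrt E ^+ 2 * c i ^+ 2 + Num.sqrt C ^+ 2 * e i ^+ 2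
          - 2 * Num.sqrt C * Num.sqrt E * (c i * e i)).
  by apply: eq_bigr => i _; ring.
rewrite sumrB big_split /= -!mulr_sumr -/C -/E -/S !sqr_sqrtr //.
move: (sqr_sqrtr C0) (sqr_sqrtr E0); move: (Num.sqrt C) (Num.sqrt E) => a b <- <-; ring.
Qed.

Lemma cs_le : S <= Num.sqrt C * Num.sqrt E.
Proof.
have H : 0 <= \sum_i (Num.sqrt E * c i - Num.sqrt C * e i) ^+ 2.
  by apply: sumr_ge0 => i _; apply: sqr_ge0.
rewrite cs_expand in H.
have ab0 : 0 <= Num.sqrt C * Num.sqrt E by apply: mulr_ge0; apply: sqrtr_ge0.
move: ab0; rewrite le0r => /orP[/eqP ab|ab]; last first.
  by rewrite -subr_ge0; rewrite -mulrA pmulr_rge0 ?pmulr_rge0 // in H.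
- move/eqP: ab; rewrite mulf_eq0 => /orP[] /eqP.
  + move/eqP; rewrite sqrtr_eq0 => hC.
    have C0 : C = 0 by apply/eqP; rewrite eq_le hC sumr_ge0 // => i _; apply: sqr_ge0.
    have := psumr_eq0P (fun i _ => sqr_ge0 (c i)) C0 => hc.
    rewrite /S big1; first exact: mulr_ge0 (sqrtr_ge0 _) (sqrtr_ge0 _).
    move=> i _.
    by move/eqP: (hc i isT); rewrite sqrf_eq0 => /eqP ->; rewrite mul0r.
  + move/eqP; rewrite sqrtr_eq0 => hE.
    have E0 : E = 0 by apply/eqP; rewrite eq_le hE sumr_ge0 // => i _; apply: sqr_ge0.
    have := psumr_eq0P (fun i _ => sqr_ge0 (e i)) E0 => he.
    rewrite /S big1; first exact: mulr_ge0 (sqrtr_ge0 _) (sqrtr_ge0 _).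
    move=> i _.
    by move/eqP: (he i isT); rewrite sqrf_eq0 => /eqP ->; rewrite mulr0.
Qed.

Lemma cs_eq : 0 < C -> S = Num.sqrt C * Num.sqrt E ->
  forall i, e i = Num.sqrt E / Num.sqrt C * c i.
Proof.
move=> Cpos hS i.
have H := cs_expand; rewrite hS subrr mulr0 in H.
have hh := psumr_eq0P (fun j _ => sqr_ge0 (Num.sqrt E * c j - Num.sqrt C * e j)) H.
have := hh i isT.
move/eqP; rewrite sqrf_eq0 subr_eq0 => /eqP h.
have a0 : Num.sqrt C != 0 by rewrite gt_eqF // sqrtr_gt0.
by rewrite mulrAC h mulrC mulrA mulVf // mul1r.
Qed.
End CS.
Lemma sum_delta (R : rcfType) n (i : 'I_n) (f : 'I_n -> R) :
  \sum_j (i == j)%:R * f j = f i.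
Proof.
rewrite (bigD1 i) //= eqxx mul1r big1 ?addr0 // => j /negPf.
by rewrite eq_sym => ->; rewrite mul0r.
Qed.

Section Proj.
Variables (R : rcfType) (m n : nat) (U : 'M[R]_(m, n)).
Hypothesis hU : U *m U^T = 1%:M.
Local Notation P := (U^T *m U).

Lemma P_sym i j : P i j = P j i.
Proof. by rewrite !mxE; apply: eq_bigr => k _; rewrite !mxE mulrC. Qed.

Lemma P_diag_ge0 i : 0 <= P i i.
Proof. by rewrite mxE; apply: sumr_ge0 => k _; rewrite !mxE -expr2 sqr_ge0. Qed.

Lemma P_row i : \sum_j P i j ^+ 2 = P i i.
Proof.
have : (P *m P) i i = P i i by rewrite mulmxA -(mulmxA U^T) hU mulmx1.
by rewrite mxE => <-; apply: eq_bigr => j _; rewrite expr2 (P_sym j i).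
Qed.

Lemma P_trace : \sum_i P i i = m%:R.
Proof.
transitivity (\sum_(k < m) (U *m U^T) k k); last first.
  by rewrite hU (eq_bigr (fun _ => 1)) ?sumr_const ?card_ord // => k _; rewrite mxE eqxx.
rewrite (eq_bigr (fun i => \sum_k U k i * U k i)); last by move=> i _; rewrite mxE; apply: eq_bigr => k _; rewrite mxE.
rewrite exchange_big /=; apply: eq_bigr => k _; rewrite mxE; apply: eq_bigr => i _; by rewrite mxE.
Qed.

Lemma P_frob : \sum_i \sum_j P i j ^+ 2 = m%:R.
Proof. by rewrite -P_trace; apply: eq_bigr => i _; rewrite P_row. Qed.
End Proj.

Lemma lin_sum (R : rcfType) n (f g : 'I_n -> R) a b c :
  \sum_i (a * f i + b * g i + c) = a * \sum_i f i + b * \sum_i g i + n%:R * c.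
Proof. by rewrite !big_split /= -!mulr_sumr sumr_const card_ord mulr_natl. Qed.

Lemma mul_sqrt (R : rcfType) (a b : R) : 0 <= a -> a * Num.sqrt b = Num.sqrt (a ^+ 2 * b).
Proof. by move=> a0; rewrite sqrtrM ?sqr_ge0 // sqrtr_sqr ger0_norm. Qed.

Section Key.
Variables (R : rcfType) (m n : nat) (t : 'rV[R]_n) (U : 'M[R]_(m, n)).
Hypotheses (hn : (1 < n)%N) (ht : \sum_i t 0 i ^+ 2 = 1) (hU : U *m U^T = 1%:M).

Definition cc i j := t 0 i * t 0 j - (i == j)%:R / n%:R.
Definition ee i j := `|(U^T *m U) i j| - (i == j)%:R * (m%:R / n%:R).

Lemma nR0 : n%:R != 0 :> R.
Proof. by rewrite pnatr_eq0 -lt0n ltnW. Qed.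

Lemma sum_cc2 : \sum_i \sum_j cc i j ^+ 2 = 1 - n%:R^-1.
Proof.
transitivity (\sum_i (1 * t 0 i ^+ 2 + (- 2 / n%:R) * t 0 i ^+ 2 + n%:R ^- 2)).
  apply: eq_bigr => i _.
  transitivity (\sum_j (t 0 i ^+ 2 * t 0 j ^+ 2 + (i == j)%:R * (n%:R ^- 2 - 2 * t 0 i * t 0 j / n%:R))).
    by apply: eq_bigr => j _; rewrite /cc; case: (i == j); rewrite /= ?mul1r ?mul0r; rewrite -?exprVn; ring.
  by rewrite big_split /= -mulr_sumr ht sum_delta; ring.
rewrite lin_sum ht; field; exact: nR0.
Qed.

Lemma sum_ee2 : \sum_i \sum_j ee i j ^+ 2 = m%:R - m%:R ^+ 2 / n%:R.
Proof.
transitivity (\sum_i ((1 - 2 * (m%:R / n%:R)) * (U^T *m U) i i + 0 * (U^T *m U) i i + (m%:R / n%:R) ^+ 2)).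
  apply: eq_bigr => i _.
  transitivity (\sum_j ((U^T *m U) i j ^+ 2 + (i == j)%:R * ((m%:R / n%:R) ^+ 2 - 2 * `|(U^T *m U) i j| * (m%:R / n%:R)))).
    by apply: eq_bigr => j _; rewrite /ee -(real_normK (num_real ((U^T *m U) i j))); case: (i == j); rewrite /= ?mul1r ?mul0r -?exprVn; ring.
  rewrite big_split /= P_row // sum_delta ger0_norm ?P_diag_ge0 //; ring.
rewrite lin_sum P_trace //; field; exact: nR0.
Qed.

Lemma sum_ccee : \sum_i \sum_j cc i j * ee i j = objective t U - m%:R / n%:R.
Proof.
transitivity (\sum_i (\sum_j t 0 i * t 0 j * `|(U^T *m U) i j|)
   + \sum_i ((- (m%:R / n%:R)) * t 0 i ^+ 2 + (- n%:R^-1) * (U^T *m U) i i + m%:R / n%:R ^+ 2)).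
  rewrite -big_split /=; apply: eq_bigr => i _.
  transitivity (\sum_j (t 0 i * t 0 j * `|(U^T *m U) i j| + (i == j)%:R *
     (- (m%:R / n%:R) * (t 0 i * t 0 j) - n%:R^-1 * `|(U^T *m U) i j| + m%:R / n%:R ^+ 2))).
    by apply: eq_bigr => j _; rewrite /cc /ee; case: (i == j); rewrite /= ?mul1r ?mul0r -?exprVn; ring.
  rewrite big_split /= sum_delta ger0_norm ?P_diag_ge0 //; ring.
rewrite lin_sum ht P_trace // /objective; field; exact: nR0.
Qed.
End Key.

Lemma sum_const_ord (R : rcfType) n (x : R) : \sum_(i < n) x = n%:R * x.
Proof. by rewrite sumr_const card_ord mulr_natl. Qed.

Section Main.
Variable R : rcfType.

Lemma cs_pair n (c e : 'I_n -> 'I_n -> R) :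
  \sum_i \sum_j c i j * e i j <=
  Num.sqrt (\sum_i \sum_j c i j ^+ 2) * Num.sqrt (\sum_i \sum_j e i j ^+ 2).
Proof.
rewrite (pair_bigA _ (fun i j => c i j * e i j)) (pair_bigA _ (fun i j => c i j ^+ 2))
  (pair_bigA _ (fun i j => e i j ^+ 2)).
exact: (cs_le (fun p => c p.1 p.2) (fun p => e p.1 p.2)).
Qed.

Lemma cs_eq_pair n (c e : 'I_n -> 'I_n -> R) :
  0 < \sum_i \sum_j c i j ^+ 2 ->
  \sum_i \sum_j c i j * e i j =
  Num.sqrt (\sum_i \sum_j c i j ^+ 2) * Num.sqrt (\sum_i \sum_j e i j ^+ 2) ->
  forall i j, e i j = Num.sqrt (\sum_i \sum_j e i j ^+ 2) / Num.sqrt (\sum_i \sum_j c i j ^+ 2) * c i j.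
Proof.
rewrite (pair_bigA _ (fun i j => c i j * e i j)) (pair_bigA _ (fun i j => c i j ^+ 2))
  (pair_bigA _ (fun i j => e i j ^+ 2)) => h1 h2 i j.
exact: (cs_eq (c := fun p => c p.1 p.2) (e := fun p => e p.1 p.2) h1 h2 (i, j)).
Qed.

Lemma norm_eq n (t : 'rV[R]_n) : norm2 t = 1 -> \sum_i t 0 i ^+ 2 = 1.
Proof.
rewrite /norm2 => h.
have s0 : 0 <= \sum_i t 0 i ^+ 2 by apply: sumr_ge0 => i _; apply: sqr_ge0.
by rewrite -(sqr_sqrtr s0) h expr1n.
Qed.

Lemma sqrt_id m n : (1 < n)%N -> (0 < m)%N ->
  Num.sqrt (1 - n%:R^-1) * Num.sqrt (m%:R - m%:R ^+ 2 / n%:R) =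
  m%:R / n%:R * Num.sqrt ((n%:R - 1) * (n%:R - m%:R) / m%:R) :> R.
Proof.
move=> hn hm.
have n0 : n%:R != 0 :> R by rewrite pnatr_eq0 -lt0n ltnW.
have m0 : m%:R != 0 :> R by rewrite pnatr_eq0 -lt0n.
have c0 : 0 <= 1 - n%:R^-1 :> R.
  by rewrite subr_ge0 invf_le1 ?ltr0n ?ler1n // ltnW.
rewrite -sqrtrM // mul_sqrt ?divr_ge0 ?ler0n //; congr Num.sqrt; field.
by rewrite n0 m0.
Qed.

Lemma sqrt_id2 m n : (1 < n)%N -> (0 < m)%N ->
  (n%:R - 1) * (n%:R^-1 * Num.sqrt ((n%:R - m%:R) * m%:R / (n%:R - 1))) =
  m%:R / n%:R * Num.sqrt ((n%:R - 1) * (n%:R - m%:R) / m%:R) :> R.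
Proof.
move=> hn hm.
have n0 : n%:R != 0 :> R by rewrite pnatr_eq0 -lt0n ltnW.
have m0 : m%:R != 0 :> R by rewrite pnatr_eq0 -lt0n.
have n1 : 0 < n%:R - 1 :> R by rewrite subr_gt0 ltr1n.
rewrite mulrA mul_sqrt ?mulr_ge0 ?invr_ge0 ?ler0n ?ltW // mul_sqrt ?divr_ge0 ?ler0n //.
congr Num.sqrt; field.
by rewrite n0 m0 gt_eqF.
Qed.
End Main.

Theorem proposition3 (R : rcfType) (m n : nat) (hm : (1 < m)%N) (hmn : (m <= n)%N) :
  (forall (t : 'rV[R]_n) (U : 'M[R]_(m, n)),
      norm2 t = 1 -> U *m U^T = 1%:M -> objective t U <= bound R m n)
  /\
  ((exists (t : 'rV[R]_n) (U : 'M[R]_(m, n)),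
      [/\ norm2 t = 1, U *m U^T = 1%:M & objective t U = bound R m n])
   <->
   (exists U : 'M[R]_(m, n),
      [/\ U *m U^T = 1%:M,
          forall i : 'I_n, (U^T *m U) i i = m%:R / n%:R
        & forall i j : 'I_n, i != j ->
            `|(U^T *m U) i j| = n%:R^-1 * Num.sqrt ((n%:R - m%:R) * m%:R / (n%:R - 1))])).
Proof.
have hn : (1 < n)%N by apply: leq_trans hmn.
have hm0 : (0 < m)%N by apply: ltnW.
have n0 : n%:R != 0 :> R by rewrite pnatr_eq0 -lt0n ltnW.
have m0 : m%:R != 0 :> R by rewrite pnatr_eq0 -lt0n.
have n1 : 0 < n%:R - 1 :> R by rewrite subr_gt0 ltr1n.
split.
  move=> t U /norm_eq ht hU.
  have := cs_pair (cc t) (ee U).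
  rewrite sum_ccee // sum_cc2 // sum_ee2 // sqrt_id // /bound => H.
  rewrite mulrDr mulr1; lra.
split.
  move=> [t [U [/norm_eq ht hU hobj]]].
  exists U.
  have Cpos : 0 < \sum_i \sum_j cc t i j ^+ 2.
    by rewrite sum_cc2 // subr_gt0 invf_lt1 ?ltr0n ?ltr1n // ltnW.
  have hS : \sum_i \sum_j cc t i j * ee U i j =
     Num.sqrt (\sum_i \sum_j cc t i j ^+ 2) * Num.sqrt (\sum_i \sum_j ee U i j ^+ 2).
    by rewrite sum_ccee // hobj sum_cc2 // sum_ee2 // sqrt_id // /bound; ring.
  have heq := cs_eq_pair Cpos hS.
  rewrite sum_cc2 // sum_ee2 // in heq.
  set L := (Num.sqrt _ / Num.sqrt _) in heq.
  have L0 : 0 <= L by exact: divr_ge0 (sqrtr_ge0 _) (sqrtr_ge0 _).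
  pose L2 : R := (n%:R - m%:R) * m%:R / (n%:R - 1).
  have Lsq : L ^+ 2 = L2.
    rewrite /L expr_div_n !sqr_sqrtr /L2; first by field; rewrite n0 gt_eqF.
      by rewrite subr_ge0 invf_le1 ?ltr0n ?ler1n // ltnW.
    by rewrite subr_ge0 ler_pdivrMr ?ltr0n ?(ltnW hn) // expr2 ler_pM2l ?ltr0n // ler_nat.
  have Leq : L = Num.sqrt L2 by rewrite -Lsq sqrtr_sqr ger0_norm.
  set a := (m%:R - L) / n%:R.
  have habs : forall i j, `|(U^T *m U) i j| = L * (t 0 i * t 0 j) + (i == j)%:R * a.
    move=> i j; have := heq i j; rewrite /ee /cc /a => /eqP; rewrite subr_eq => /eqP ->.
    by field.
  have hdiag : forall i, (U^T *m U) i i = L * t 0 i ^+ 2 + a.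
    by move=> i; rewrite -(ger0_norm (P_diag_ge0 U i)) habs eqxx /= expr2; ring.
  have hrow : forall i, (U^T *m U) i i = L ^+ 2 * t 0 i ^+ 2 + 2 * a * L * t 0 i ^+ 2 + a ^+ 2.
    move=> i; rewrite -P_row //.
    transitivity (\sum_j (L ^+ 2 * t 0 i ^+ 2 * t 0 j ^+ 2 + (i == j)%:R * (2 * a * L * (t 0 i * t 0 j) + a ^+ 2))).
      apply: eq_bigr => j _; rewrite -(real_normK (num_real _)) habs.
      by case: (i == j); rewrite /= ?mul1r ?mul0r; ring.
    by rewrite big_split /= -mulr_sumr ht sum_delta; ring.
  set K := L - L ^+ 2 - 2 * a * L.
  have hK : forall i, K * t 0 i ^+ 2 = a ^+ 2 - a.
    move=> i; have e := hdiag i; rewrite hrow in e.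
    apply/eqP; rewrite -subr_eq0; apply/eqP.
    transitivity ((L * t 0 i ^+ 2 + a) - (L ^+ 2 * t 0 i ^+ 2 + 2 * a * L * t 0 i ^+ 2 + a ^+ 2)).
      by rewrite /K; ring.
    by rewrite e subrr.
  have hKsum : K = n%:R * (a ^+ 2 - a).
    transitivity (K * \sum_i t 0 i ^+ 2); first by rewrite ht mulr1.
    rewrite mulr_sumr (eq_bigr _ (fun i _ => hK i)).
    by rewrite sumr_const card_ord mulr_natl.
  have [ha|ha] := eqVneq (a ^+ 2 - a) 0.
    have : a * (a - 1) = 0 by rewrite -ha; ring.
    move/eqP; rewrite mulf_eq0 => /orP[] /eqP ha'.
      exfalso.
      have hLm : L = m%:R.
        by move: ha'; rewrite /a => /eqP; rewrite mulf_eq0 invr_eq0 (negPf n0) orbF subr_eq0 => /eqP.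
      have : m%:R * n%:R * (m%:R - 1) = 0 :> R.
        transitivity ((n%:R - 1) * (L ^+ 2 - L2)); last by rewrite Lsq subrr mulr0.
        by rewrite hLm /L2; field; rewrite gt_eqF.
      move/eqP; rewrite !mulf_eq0 (negPf m0) (negPf n0) /= subr_eq0 pnatr_eq1 => /eqP hm1.
      by rewrite hm1 in hm.
    have hL : m%:R - L = n%:R.
      by move: ha'; rewrite /a => /eqP; rewrite subr_eq0 => /eqP h; rewrite -(divfK n0 (m%:R - L)) h mul1r.
    have hmn' : m%:R <= n%:R :> R by rewrite ler_nat.
    have L00 : L = 0 by apply/eqP; rewrite eq_le L0 andbT; lra.
    have hmnR : m%:R = n%:R :> R by lra.
    split => //.
      by move=> i; rewrite hdiag L00 hmnR mul0r add0r divff // /a L00 subr0 hmnR divff.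
    by move=> i j hij; rewrite -Leq habs (negPf hij) L00 !mul0r addr0 mulr0.
  have K0 : K != 0 by rewrite hKsum mulf_neq0.
  have hx : forall i, t 0 i ^+ 2 = n%:R^-1.
    move=> i; apply: (mulfI K0); rewrite hK {1}hKsum; field; exact: n0.
  split => //.
    by move=> i; rewrite hdiag hx /a; field.
  move=> i j hij; rewrite -Leq -[LHS]normr_id habs (negPf hij) mul0r addr0.
  rewrite normrM (ger0_norm L0) normrM -(sqrtr_sqr (t 0 i)) -(sqrtr_sqr (t 0 j)) !hx -expr2 sqr_sqrtr.
    by rewrite mulrC.
  by rewrite invr_ge0 ler0n.
move=> [U [hU hd ho]].
pose s : R := Num.sqrt (n%:R^-1).
have s2 : s * s = n%:R^-1 by rewrite -expr2 sqr_sqrtr // invr_ge0 ler0n.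
exists (const_mx s), U; split => //.
  rewrite /norm2 (eq_bigr (fun _ => n%:R^-1)) => [|i _]; last by rewrite mxE expr2 s2.
  by rewrite sumr_const card_ord -(mulr_natr (n%:R^-1 : R) n) mulVf // sqrtr1.
pose w : R := n%:R^-1 * Num.sqrt ((n%:R - m%:R) * m%:R / (n%:R - 1)).
rewrite /objective.
transitivity (\sum_(i < n) (n%:R * (n%:R^-1 * w) + n%:R^-1 * (m%:R / n%:R - w))).
  apply: eq_bigr => i _.
  transitivity (\sum_(j < n) (n%:R^-1 * w + (i == j)%:R * (n%:R^-1 * (m%:R / n%:R - w)))).
    apply: eq_bigr => j _; rewrite [const_mx s 0 i]mxE [const_mx s 0 j]mxE s2.
    case: (eqVneq i j) => [<-|hij].
      by rewrite hd ger0_norm ?divr_ge0 ?ler0n //=; ring.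
    by rewrite ho //= -/w; ring.
  by rewrite big_split /= sumr_const card_ord sum_delta -(mulr_natl (n%:R^-1 * w) n).
rewrite sum_const_ord /bound [RHS]mulrDr mulr1 -(sqrt_id2 R hn hm0) -/w.
field; exact: n0.
Qed.
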